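(* Let $k\ge2$ and let $\phi$ be a monotone $[k]$-edge-labeling of $K^{(2)}_n$ that minimizes the number of bad triples among all monotone $[k]$-edge-labelings of $K^{(2)}_n$. Then for every $2\le i\le k$, $$|X_i|+|X_{i+1}|\le|X_{i-2}|+|X_{i-1}|+2.$$
   Context: $K^{(2)}_n$ is the complete graph on $[n]$ with its natural order. A $[k]$-edge-labeling $\phi$ assigns to each pair $uv$ ($u<v$) a label $\phi(uv)\in\{1,\dots,k\}$; it is monotone if $\phi(uv)\le\phi(vw)$ whenever $u<v<w$. A triple $u<v<w$ is good if $\phi(uv)<\phi(vw)$ and bad otherwise. Define $\Phi_L(1)=0$ and $\Phi_L(v)=\max\{\phi(uv):u<v\}$ for $v>1$. For $0\le i\le k+1$ let $X_i=\{v\in[n]:\Phi_L(v)=i\}$. *)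

(* Defs.v *)
(* Vertices of K_n are 'I_n (vertex v+1 of the paper is v : 'I_n),
   ordered by their natural value. *)
From mathcomp Require Import all_boot.
Set Implicit Arguments. Unset Strict Implicit. Unset Printing Implicit Defensive.

(* phi u v is the label of the edge uv for u < v; values at u >= v are irrelevant. *)
Definition is_labeling (n k : nat) (phi : 'I_n -> 'I_n -> nat) : Prop :=
  forall u v : 'I_n, u < v -> 1 <= phi u v <= k.

Definition is_monotone (n : nat) (phi : 'I_n -> 'I_n -> nat) : Prop :=
  forall u v w : 'I_n, u < v -> v < w -> phi u v <= phi v w.

Definition bad_triples (n : nat) (phi : 'I_n -> 'I_n -> nat) : {set 'I_n * 'I_n * 'I_n} :=
  [set t : 'I_n * 'I_n * 'I_n | [&& t.1.1 < t.1.2, t.1.2 < t.2 & ~~ (phi t.1.1 t.1.2 < phi t.1.2 t.2)]].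

Definition num_bad (n : nat) (phi : 'I_n -> 'I_n -> nat) : nat := #|bad_triples phi|.

Definition is_optimal (n k : nat) (phi : 'I_n -> 'I_n -> nat) : Prop :=
  [/\ is_labeling k phi, is_monotone phi &
      forall psi : 'I_n -> 'I_n -> nat, is_labeling k psi -> is_monotone psi -> num_bad phi <= num_bad psi].

(* Phi_L(v) = max_{u<v} phi(uv), and 0 for the first vertex (empty max). *)
Definition PhiL (n : nat) (phi : 'I_n -> 'I_n -> nat) (v : 'I_n) : nat :=
  \max_(u : 'I_n | u < v) phi u v.

Definition X (n : nat) (phi : 'I_n -> 'I_n -> nat) (i : nat) : {set 'I_n} :=
  [set v | PhiL phi v == i].

(* Main.v *)
Require Import Defs.
From mathcomp Require Import all_boot.
From mathcomp Require Import zify.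
Set Implicit Arguments. Unset Strict Implicit. Unset Printing Implicit Defensive.

Lemma sq_aux (h m : nat) : 2 * (h * m) + m <= h * h + m * m + h.
Proof.
case: (leqP h m) => hm.
  rewrite -(subnKC hm); set e := m - h.
  have : e <= e * e by case: e => // e; rewrite mulSn leq_addr.
  rewrite !mulnDr !mulnDl; lia.
move: hm => /ltnW hm; rewrite -(subnKC hm); set e := h - m.
rewrite !mulnDr !mulnDl; lia.
Qed.

Lemma arith (a b c d h m L AY BY PT PS : nat) :
  a + b + 2 < c + d -> h <= AY -> 0 < AY -> c + L <= BY + 1 -> d = L + m ->
  2 * PT + m = m * m -> 2 * PS + h = h * h -> h <= b ->
  AY * BY + PT <= h * a + PS + h * (b - h) -> False.
Proof.
move=> H A1 A2 B1 B2 P2 P3 hb K.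
have hBY : h * BY <= AY * BY by rewrite leq_mul2r A1 orbT.
have BYm : a + b + 2 <= BY + m by lia.
case: (posnP h) => [h0|hpos].
  subst h; rewrite !mul0n in K P3; have PS0 : PS = 0 by lia.
  have E : AY * BY = 0 by lia.
  move/eqP: E; rewrite muln_eq0 => /orP[/eqP|/eqP] E; first lia.
  subst BY.
  have m1 : m <= 1.
    clear B2; case: m P2 BYm => // [[|m]] //=; rewrite !mulSn; lia.
  lia.
have HB : h * (a + b + 2) <= h * (BY + m) by rewrite leq_mul2l BYm orbT.
rewrite !mulnDr in HB.
have hb' : h * (b - h) = h * b - h * h by rewrite mulnBr.
have hh : h * h <= h * b by rewrite leq_mul2l hb orbT.
have sq := sq_aux h m.
rewrite hb' in K.
lia.
Qed.

Section Basic.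
Variables (n : nat) (phi : 'I_n -> 'I_n -> nat).

Local Notation F := (PhiL phi).

Lemma phi_le_F (u v : 'I_n) : u < v -> phi u v <= F v.
Proof. move=> uv; exact: (@leq_bigmax_cond _ (fun t : 'I_n => t < v) (fun t => phi t v) u uv). Qed.

Lemma F_le_phi (u v : 'I_n) : is_monotone phi -> u < v -> F u <= phi u v.
Proof. move=> mono uv; apply/bigmax_leqP => t tu; exact: mono tu uv. Qed.

Lemma F_mono (u v : 'I_n) : is_monotone phi -> u <= v -> F u <= F v.
Proof.
move=> mono; rewrite leq_eqVlt => /orP[/eqP/val_inj->//|uv].
exact: leq_trans (F_le_phi mono uv) (phi_le_F uv).
Qed.

Lemma F_lt (u v : 'I_n) : is_monotone phi -> F u < F v -> u < v.
Proof. move=> mono; apply: contraTT; rewrite -!leqNgt; exact: F_mono. Qed.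

Lemma F0 (v : 'I_n) : val v = 0 -> F v = 0.
Proof. move=> v0; rewrite /PhiL big_pred0 // => u; by rewrite v0 ltn0. Qed.

Lemma F_attained (v : 'I_n) : 0 < F v -> exists2 u : 'I_n, u < v & phi u v = F v.
Proof.
move=> Fpos.
case: (pickP [pred u : 'I_n | u < v]) => [u uv | none]; last first.
  by move: Fpos; rewrite /PhiL big_pred0.
have : 0 < #|[pred u : 'I_n | u < v]| by apply/card_gt0P; exists u.
case/(eq_bigmax_cond (fun t => phi t v)) => w wv Hw.
exists w => //; rewrite /PhiL Hw //.
Qed.

Lemma F_le_k k (v : 'I_n) : is_labeling k phi -> F v <= k.
Proof. move=> lab; apply/bigmax_leqP => u uv; by case/andP: (lab u v uv). Qed.

Definition badt (psi : 'I_n -> 'I_n -> nat) (t v x : 'I_n) : nat :=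
  [&& t < v, v < x & psi v x <= psi t v].

Lemma num_badE (psi : 'I_n -> 'I_n -> nat) :
  num_bad psi = \sum_v \sum_t \sum_x badt psi t v x.
Proof.
rewrite /num_bad -sum1_card big_mkcond /=.
have E2 : forall (A B C : finType) (G : A -> B -> C -> nat),
    \sum_(p : (A * B) * C) G p.1.1 p.1.2 p.2 = \sum_a \sum_b \sum_c G a b c.
  move=> A B C G.
  rewrite pair_big /=; rewrite pair_big /=.
  by apply: eq_bigr => [[[a b] c]] _.
transitivity (\sum_t \sum_v \sum_x badt psi t v x); last by rewrite exchange_big.
rewrite -(E2 _ _ _ (fun t v x => badt psi t v x)).
apply: eq_bigr => [[[t v] x]] _ /=.
by rewrite inE /= /badt -leqNgt; case: ifP.
Qed.

End Basic.



Section Exchange.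
Variables (n k : nat) (phi : 'I_n -> 'I_n -> nat) (i : nat) (y : 'I_n).
Hypotheses (lab : is_labeling k phi) (mono : is_monotone phi) (i2 : 2 <= i) (ik : i <= k)
  (Fy : PhiL phi y = i) (ymin : forall v : 'I_n, PhiL phi v = i -> y <= v).
Local Notation F := (PhiL phi).

Definition psi (u v : 'I_n) : nat :=
  if v == y then (if phi u y == i then i.-1 else phi u y)
  else if [&& u == y, phi y v == i.+1 & F v == i.+1] then i
  else if [&& F v == i.-1, F u + 3 <= i & phi u v == i.-1] then i - 2
  else phi u v.

Lemma before_y (t : 'I_n) : t < y -> F t <= i.-1.
Proof.
move=> ty; have := F_mono mono (ltnW ty); rewrite Fy => h.
have : F t != i by apply/eqP => E; have := ymin E; rewrite leqNgt ty.
move/eqP; lia.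
Qed.

Lemma psi_le u v : psi u v <= phi u v.
Proof.
rewrite /psi; case: eqP => [->|_]; first by case: eqP => [->|] //; lia.
case: ifP => [/and3P[/eqP-> /eqP-> _]|_]; first lia.
case: ifP => [/and3P[_ _ /eqP->]|_]; lia.
Qed.

Lemma psi_y_in (t : 'I_n) : t < y -> psi t y <= i.-1.
Proof.
move=> ty; rewrite /psi eqxx; have := phi_le_F phi ty; rewrite Fy.
case: eqP => [_|]; lia.
Qed.

Lemma y_lt (x : 'I_n) : i < F x -> y < x.
Proof. by move=> h; apply: (F_lt mono); rewrite Fy. Qed.

Lemma lt_y (x : 'I_n) : F x < i -> x < y.
Proof. by move=> h; apply: (F_lt mono); rewrite Fy. Qed.

Lemma psi_y_out (x : 'I_n) : y < x -> i <= psi y x.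
Proof.
move=> yx; rewrite /psi.
case: eqP => [E|_]; first by move: yx; rewrite E ltnn.
rewrite eqxx /=; case: ifP => // _.
have := F_mono mono (ltnW yx); rewrite Fy => Fx.
case: ifP => [/and3P[/eqP Fx' _ _]|_]; first lia.
by have := F_le_phi mono yx; rewrite Fy.
Qed.

Lemma psi_lab : is_labeling k psi.
Proof.
move=> u v uv; apply/andP; split; last first.
  by apply: leq_trans (psi_le u v) _; case/andP: (lab uv).
have /andP[h1 _] := lab uv.
rewrite /psi; case: eqP => [Ev|_]; first by rewrite -Ev; case: eqP => //; lia.
case: ifP => _; first lia.
case: ifP => [/and3P[_ h _]|_] //; lia.
Qed.

Lemma psi_mono : is_monotone psi.
Proof.
move=> u v w uv vw.
have Hu := psi_le u v.
case: (v =P y) => [Ev|nvy].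
  subst v; have := psi_y_in uv; have := psi_y_out vw; lia.
case: (w =P y) => [Ew|nwy].
  subst w; have Fv := before_y vw.
  have Fuv := phi_le_F phi uv.
  have mv := mono uv vw.
  rewrite {2}/psi eqxx; case: eqP => _; lia.
rewrite {2}/psi; move/eqP/negbTE: nwy => ->.
move/eqP/negbTE: nvy => -> /=.
case: ifP => [/and3P[_ h3 _]|_]; last by have := mono uv vw; lia.
have := phi_le_F phi uv; lia.
Qed.

Definition S := [set v | (F v == i.-1) && (phi v y == i)].
Definition TH := [set v | (F v == i.+1) && (phi y v == i.+1)].

Lemma key (t v x : 'I_n) :
  badt psi t v x + (v == y) * (((t < y) && (phi t y == i)) * ((y < x) && (phi y x == i)))
   + (v \in TH) * ((t == y) * ((v < x) && (phi v x == i.+1)))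
  <= badt phi t v x + (v \in S) * (((t < v) && (psi t v == i.-1)) * (x == y)).
Proof.
rewrite /badt.
case: (v =P y) => [Ev|nvy].
  subst v.
  have -> : (y \in TH) = false by rewrite inE Fy; apply/negbTE; rewrite negb_and; apply/orP; left; lia.
  have -> : (y \in S) = false by rewrite inE Fy; apply/negbTE; rewrite negb_and; apply/orP; left; lia.
  rewrite !mul0n !addn0 mul1n.
  case: (boolP (t < y)) => ty //=; case: (boolP (y < x)) => yx //=; rewrite ?muln0 ?mul0n //.
  have := psi_y_in ty; have := psi_y_out yx => h1 h2.
  have -> : (psi y x <= psi t y) = false by apply/negbTE; rewrite -ltnNge; lia.
  rewrite add0n; case: eqP => [->|] //=; case: eqP => [->|] //=; by rewrite leqnn.
case: (boolP (v \in TH)) => vTH.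
  have := vTH; rewrite inE => /andP[/eqP Fv /eqP pyv].
  have yv : y < v by apply: y_lt; lia.
  have -> : (v \in S) = false by rewrite inE Fv; apply/negbTE; rewrite negb_and; apply/orP; left; lia.
  rewrite mul0n addn0 mul1n.
  have nvy' : (v == y) = false by apply/eqP.
  rewrite ?mul0n ?addn0.
  have pvx : v < x -> psi v x = phi v x.
    move=> vx; have yx := ltn_trans yv vx.
    have Fx : i.+1 <= F x by rewrite -Fv; exact: (F_mono mono (ltnW vx)).
    rewrite /psi.
    have -> : (x == y) = false by apply/negbTE; apply/eqP => E; move: yx; rewrite E ltnn.
    rewrite nvy' /=.
    have -> : (F x == i.-1) = false by apply/negbTE; apply/eqP; lia.
    by [].
  case: (t =P y) => [Et|nty].
    subst t; rewrite mul1n yv /=.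
    have -> : psi y v = i by rewrite /psi nvy' eqxx pyv Fv !eqxx.
    case: (boolP (v < x)) => vx //=.
    rewrite (pvx vx).
    have := F_le_phi mono vx; rewrite Fv => h.
    rewrite pyv; have -> : (phi v x <= i) = false by rewrite leqNgt h.
    by case: eqP => [->|] //=; rewrite leqnn.
  rewrite mul0n addn0.
  have -> : psi t v = phi t v.
    rewrite /psi nvy'.
    have -> : (t == y) = false by apply/eqP.
    by have -> : (F v == i.-1) = false by apply/negbTE; apply/eqP; lia.
  case: (boolP (t < v)) => //= tv; case: (boolP (v < x)) => //= vx.
  by rewrite (pvx vx).
rewrite mul0n addn0.
have nvy' : (v == y) = false by apply/eqP.
rewrite ?mul0n ?addn0.
case: (boolP (t < v)) => //= tv; case: (boolP (v < x)) => //= vx.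
have ptv := psi_le t v.
have Fv := phi_le_F phi tv.
case: (boolP (psi v x <= psi t v)) => //= bad.
case: (x =P y) => [Ex|nxy].
  subst x.
  have E : psi v y = (if phi v y == i then i.-1 else phi v y) by rewrite /psi eqxx.
  rewrite E in bad.
  move: bad; case: eqP => [pvy|npvy]; last first.
    move=> h; have -> : phi v y <= phi t v by lia.
    by [].
  move=> h.
  have Fvle := before_y vx.
  have Fveq : F v = i.-1 by lia.
  have vS : v \in S by rewrite inE Fveq pvy !eqxx.
  rewrite vS mul1n ?eqxx ?muln1.
  have -> : psi t v == i.-1 by apply/eqP; lia.
  by rewrite addn1.
move: bad; rewrite {1}/psi.
have -> : (x == y) = false by apply/eqP.
rewrite nvy' /=.
case: ifP => [/and3P[_ h3 _]|_] h; first by exfalso; lia.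
have -> : phi v x <= phi t v by lia.
by rewrite leq_addr.
Qed.

Definition ay := \sum_(t : 'I_n) ((t < y) && (phi t y == i)).
Definition by_ := \sum_(x : 'I_n) ((y < x) && (phi y x == i)).
Definition bp (v : 'I_n) := \sum_(x : 'I_n) ((v < x) && (phi v x == i.+1)).
Definition at_ (v : 'I_n) := \sum_(t : 'I_n) ((t < v) && (psi t v == i.-1)).

Lemma sum3_split (f g : 'I_n -> 'I_n -> 'I_n -> nat) :
  \sum_(v : 'I_n) \sum_(t : 'I_n) \sum_(x : 'I_n) (f v t x + g v t x) =
  \sum_(v : 'I_n) \sum_(t : 'I_n) \sum_(x : 'I_n) f v t x + \sum_(v : 'I_n) \sum_(t : 'I_n) \sum_(x : 'I_n) g v t x.
Proof.
rewrite -big_split; apply: eq_bigr => v _; rewrite -big_split; apply: eq_bigr => t _.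
by rewrite -big_split.
Qed.

Lemma main_ineq :
  num_bad psi + ay * by_ + \sum_(v : 'I_n) (v \in TH) * bp v <= num_bad phi + \sum_(v : 'I_n) (v \in S) * at_ v.
Proof.
rewrite !num_badE.
have H : \sum_(v : 'I_n) \sum_(t : 'I_n) \sum_x
   (badt psi t v x + (v == y) * (((t < y) && (phi t y == i)) * ((y < x) && (phi y x == i)))
   + (v \in TH) * ((t == y) * ((v < x) && (phi v x == i.+1))))
  <= \sum_(v : 'I_n) \sum_(t : 'I_n) \sum_(x : 'I_n) (badt phi t v x + (v \in S) * (((t < v) && (psi t v == i.-1)) * (x == y))).
  by apply: leq_sum => v _; apply: leq_sum => t _; apply: leq_sum => x _; exact: key.
rewrite !sum3_split in H.
move: H.
have -> : \sum_(v : 'I_n) \sum_(t : 'I_n) \sum_(x : 'I_n) ((v == y) * (((t < y) && (phi t y == i)) * ((y < x) && (phi y x == i))))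
   = ay * by_.
  rewrite (bigD1 y) //= [X in _ + X]big1 ?addn0; last first.
    by move=> v /= vy; rewrite (negbTE vy); apply: big1 => t _; apply: big1 => x _.
  rewrite eqxx /ay /by_ big_distrl; apply: eq_bigr => t _; rewrite big_distrr; apply: eq_bigr => x _.
  by rewrite mul1n.
have -> : \sum_(v : 'I_n) \sum_(t : 'I_n) \sum_(x : 'I_n) ((v \in TH) * ((t == y) * ((v < x) && (phi v x == i.+1))))
   = \sum_(v : 'I_n) (v \in TH) * bp v.
  apply: eq_bigr => v _; rewrite (bigD1 y) //= [X in _ + X]big1 ?addn0; last first.
    by move=> t /= ty; rewrite (negbTE ty); apply: big1 => x _; rewrite mul0n muln0.
  by rewrite /bp big_distrr; apply: eq_bigr => x _; rewrite eqxx mul1n.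
have -> : \sum_(v : 'I_n) \sum_(t : 'I_n) \sum_(x : 'I_n) ((v \in S) * (((t < v) && (psi t v == i.-1)) * (x == y)))
   = \sum_(v : 'I_n) (v \in S) * at_ v.
  apply: eq_bigr => v _; rewrite /at_ big_distrr; apply: eq_bigr => t _.
  rewrite (bigD1 y) //= [X in _ + X]big1 ?addn0; last by move=> x /= xy; rewrite (negbTE xy) !muln0.
  by rewrite eqxx muln1.
by [].
Qed.

Lemma sum_b_card (A : {set 'I_n}) : \sum_(t : 'I_n) (t \in A) = #|A|.
Proof. by rewrite -sum1_card [RHS]big_mkcond; apply: eq_bigr => t _; case: (t \in A). Qed.

Lemma ay_ge_S : #|S| <= ay.
Proof.
rewrite -sum_b_card; apply: leq_sum => t _.
case: (boolP (t \in S)) => //; rewrite inE => /andP[/eqP Ft /eqP pty].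
by rewrite (lt_y (x:=t)) ?pty ?eqxx //; lia.
Qed.

Lemma ay_pos : 0 < ay.
Proof.
have : 0 < F y by rewrite Fy; lia.
case/(F_attained) => t ty pt.
rewrite /ay (bigD1 t) //= ty pt Fy eqxx.
by [].
Qed.

Definition TL := [set x | (F x == i.+1) && (phi y x == i)].

Lemma by_bound : #|X phi i| + #|TL| <= by_ + 1.
Proof.
have -> : 1 = \sum_(x : 'I_n) (x == y : nat) by rewrite (bigD1 y) //= eqxx big1 // => x /negbTE ->.
rewrite -!sum_b_card /by_ -big_split -[X in _ <= X]big_split; apply: leq_sum => x _ /=.
rewrite !inE.
case: (x =P y) => [->|nxy].
  rewrite Fy eqxx /=.
  have -> : (i == i.+1) = false by lia.
  by rewrite /= addn0 addn1.
rewrite addn0.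
case: (boolP (F x == i)) => [/eqP Fx|nFx].
  have -> : (F x == i.+1) = false by rewrite Fx; lia.
  have yx : y < x.
    by have := ymin Fx; rewrite leq_eqVlt => /orP[/eqP/val_inj E|//]; case: nxy.
  have h1 := F_le_phi mono yx; have h2 := phi_le_F phi yx.
  by rewrite yx /= (_ : phi y x == i) //; apply/eqP; lia.
rewrite add0n.
case: (boolP ((F x == i.+1) && (phi y x == i))) => //= /andP[/eqP Fx ->].
by rewrite (y_lt (x:=x)) //; lia.
Qed.

Lemma Xsucc_split : #|X phi i.+1| = #|TL| + #|TH|.
Proof.
rewrite -!sum_b_card -big_split; apply: eq_bigr => x _ /=.
rewrite !inE.
case: (boolP (F x == i.+1)) => [/eqP Fx|] //=.
have yx : y < x by apply: y_lt; lia.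
have h1 := F_le_phi mono yx; have h2 := phi_le_F phi yx.
rewrite Fy in h1; rewrite Fx in h2.
case: (boolP (phi y x == i)) => [/eqP ->|ne] /=; first by have -> : (i == i.+1) = false by lia.
by rewrite (_ : phi y x == i.+1) //; apply/eqP; move/eqP: ne; lia.
Qed.

Definition Pairs (A : {set 'I_n}) := \sum_(v : 'I_n) \sum_(x : 'I_n) [&& v \in A, x \in A & v < x].

Lemma Pairs_TH : Pairs TH <= \sum_(v : 'I_n) (v \in TH) * bp v.
Proof.
apply: leq_sum => v _; rewrite /bp big_distrr; apply: leq_sum => x _ /=.
case: (boolP (v \in TH)) => //= vT; case: (boolP (x \in TH)) => //= xT.
case: (boolP (v < x)) => //= vx.
move: vT xT; rewrite !inE => /andP[/eqP Fv _] /andP[/eqP Fx _].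
have h1 := F_le_phi mono vx; have h2 := phi_le_F phi vx.
by rewrite (_ : phi v x == i.+1) //; apply/eqP; lia.
Qed.

Lemma Pairs_sq (A : {set 'I_n}) : 2 * Pairs A + #|A| = #|A| * #|A|.
Proof.
have E1 : #|A| * #|A| = \sum_(v : 'I_n) \sum_(x : 'I_n) ((v \in A) && (x \in A)).
  rewrite -{1}sum_b_card big_distrl; apply: eq_bigr => v _.
  rewrite -sum_b_card big_distrr; apply: eq_bigr => x _.
  by case: (v \in A); case: (x \in A).
have E2 : #|A| = \sum_(v : 'I_n) \sum_(x : 'I_n) [&& v \in A, x \in A & v == x].
  rewrite -sum_b_card; apply: eq_bigr => v _.
  rewrite (bigD1 v) //= big1 ?addn0; first by rewrite eqxx andbT andbb.
  by move=> x /= /negbTE nx; rewrite eq_sym in nx; rewrite nx !andbF.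
have E3 : Pairs A = \sum_(v : 'I_n) \sum_(x : 'I_n) [&& v \in A, x \in A & x < v].
  rewrite /Pairs exchange_big; apply: eq_bigr => v _; apply: eq_bigr => x _.
  by rewrite andbCA.
rewrite E1 E2 mul2n -addnn {2}E3 /Pairs -!big_split; apply: eq_bigr => v _.
rewrite -!big_split; apply: eq_bigr => x _ /=.
case: (v \in A); case: (x \in A) => //=.
by rewrite -val_eqE /=; case: (ltngtP v x).
Qed.

Lemma at_bound (v : 'I_n) : v \in S ->
  at_ v <= \sum_(t : 'I_n) ((t \in X phi (i - 2)) + ((t \in S) && (t < v)) + (t \in X phi i.-1 :\: S)).
Proof.
move=> vS; have := vS; rewrite inE => /andP[/eqP Fv /eqP pvy].
have vy : v < y by apply: lt_y; lia.
apply: leq_sum => t _.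
case: (boolP (t < v)) => //= tv; case: eqP => // E.
have ty : (t == y) = false by apply/negbTE; apply/eqP => Et; move: tv vy; rewrite Et; lia.
have vy' : (v == y) = false by apply/negbTE; apply/eqP => Ev; move: vy; rewrite Ev ltnn.
move: E; rewrite /psi vy' ty /=.
case: ifP => [_|C E]; first lia.
have h1 := F_le_phi mono tv.
rewrite Fv E eqxx /= andbT in C.
rewrite !inE.
case: (boolP (F t == i - 2)) => //= nF.
have Ft : F t = i.-1 by move/eqP: nF; move/negbT: C; lia.
rewrite Ft eqxx /=.
by case: (phi t y == i).
Qed.

Lemma S_bound :
  \sum_(v : 'I_n) (v \in S) * at_ v <= #|S| * #|X phi (i - 2)| + Pairs S + #|S| * #|X phi i.-1 :\: S|.
Proof.
apply: (@leq_trans (\sum_(v : 'I_n) ((v \in S) * #|X phi (i - 2)| +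
     \sum_(t : 'I_n) [&& t \in S, v \in S & t < v] + (v \in S) * #|X phi i.-1 :\: S|))).
  apply: leq_sum => v _.
  case: (boolP (v \in S)) => vS; last by rewrite mul0n.
  rewrite !mul1n; apply: leq_trans (at_bound vS) _.
  rewrite !big_split /= !sum_b_card.
  rewrite leq_add2r leq_add2l; apply: leq_sum => t _.
  by [].
rewrite !big_split /= -!big_distrl /= !sum_b_card.
rewrite leq_add2r leq_add2l /Pairs exchange_big /=.
by [].
Qed.

Hypothesis opt : forall psi0 : 'I_n -> 'I_n -> nat, is_labeling k psi0 -> is_monotone psi0 -> num_bad phi <= num_bad psi0.

Lemma core_sec : #|X phi i| + #|X phi i.+1| <= #|X phi (i - 2)| + #|X phi i.-1| + 2.
Proof.
rewrite leqNgt; apply/negP => H.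
have M := main_ineq.
have O := opt psi_lab psi_mono.
have P1 := Pairs_TH. have SB := S_bound.
have Ssub : S \subset X phi i.-1 by apply/subsetP => v; rewrite !inE => /andP[->].
have SX : #|X phi i.-1 :\: S| = #|X phi i.-1| - #|S|.
  by rewrite cardsD (setIidPr Ssub).
have hb : #|S| <= #|X phi i.-1| by apply: subset_leq_card.
rewrite SX in SB.
apply: (arith H ay_ge_S ay_pos by_bound Xsucc_split (Pairs_sq TH) (Pairs_sq S) hb).
move: M O P1 SB.
set STH := \sum_(v : 'I_n) (v \in TH) * bp v. set SS := \sum_(v : 'I_n) (v \in S) * at_ v.
set R := _ + Pairs S + _.
set nbp := num_bad psi. set nbf := num_bad phi. set AB := ay * by_. set PT := Pairs TH.
move=> M O P1 SB.
lia.
Qed.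

End Exchange.



Lemma core n k (phi : 'I_n -> 'I_n -> nat) j : is_optimal k phi -> 2 <= j -> j <= k -> X phi j != set0 ->
  #|X phi j| + #|X phi j.+1| <= #|X phi (j - 2)| + #|X phi j.-1| + 2.
Proof.
case=> lab mono opt j2 jk /set0Pn[y0 y0X].
case: (arg_minnP (fun v : 'I_n => val v) y0X) => y yX ymin.
apply: (@core_sec n k phi j y lab mono j2 jk) => //.
- have yX' : y \in X phi j := yX.
  by move: yX'; rewrite inE => /eqP.
- move=> v Fv; apply: ymin; change (v \in X phi j); by rewrite inE Fv.
Qed.

Theorem lemma4p9 (n k : nat) (phi : 'I_n -> 'I_n -> nat) :
  2 <= k -> is_optimal k phi ->
  forall i, 2 <= i <= k ->
    #|X phi i| + #|X phi i.+1| <= #|X phi (i - 2)| + #|X phi i.-1| + 2.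
Proof.
move=> k2 optp i /andP[i2 ik].
case: (boolP (X phi i == set0)) => [/eqP Xi0|Xi]; last exact: core optp i2 ik Xi.
rewrite Xi0 cards0 add0n.
case: (boolP (X phi i.+1 == set0)) => [/eqP X10|X1]; first by rewrite X10 cards0.
have ik1 : i.+1 <= k.
  case/set0Pn: X1 => v; rewrite inE => /eqP <-.
  by case: optp => lab _ _; exact: F_le_k.
have i21 : 2 <= i.+1 by lia.
have := core optp i21 ik1 X1.
rewrite (_ : i.+1 - 2 = i.-1); last by lia.
rewrite /= Xi0 cards0 addn0.
lia.
Qed.
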